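(* Let $n\ge1$ and $1\le k\le d$ be integers, $p=k/d$, and $\mathbf{e}_1,\dots,\mathbf{e}_n\in\mathbb{R}^d$. Let $F_i(\mathbf{w})=\frac12\|\mathbf{w}-\mathbf{e}_i\|_2^2$, $F(\mathbf{w})=\frac1n\sum_{i=1}^nF_i(\mathbf{w})$, and $\mathbf{w}^*=\frac1n\sum_{i=1}^n\mathbf{e}_i$ its minimizer. Consider the following algorithm with step size $\eta>0$: start from arbitrary $\mathbf{w}^{(0)}\in\mathbb{R}^d$ and $\mathbf{b}_i^{(0)}=\mathbf{0}$ for all $i$. At round $t=0,1,2,\dots$: each node $i$ computes $\mathbf{x}_i^{(t)}=\nabla F_i(\mathbf{w}^{(t)})=\mathbf{w}^{(t)}-\mathbf{e}_i$ and independently (across nodes and rounds) chooses a uniformly random subset $S_i^{(t)}\subseteq\{1,\dots,d\}$ of size $k$, sending $x_{ij}^{(t)}$ for $j\in S_i^{(t)}$; the server forms $\mathbf{h}_i'^{(t)}$ with $h'^{(t)}_{ij}=b^{(t)}_{ij}$ if $j\notin S_i^{(t)}$ and $h'^{(t)}_{ij}=b^{(t)}_{ij}+\frac dk(x^{(t)}_{ij}-b^{(t)}_{ij})$ if $j\in S_i^{(t)}$, sets $\hat{\mathbf{x}}^{(t)}=\frac1n\sum_i\mathbf{h}_i'^{(t)}$ and $\mathbf{w}^{(t+1)}=\mathbf{w}^{(t)}-\eta\hat{\mathbf{x}}^{(t)}$, and updates $b^{(t+1)}_{ij}=x^{(t)}_{ij}$ if $j\in S_i^{(t)}$ and $b^{(t+1)}_{ij}=b^{(t)}_{ij}$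 otherwise. If $$\eta\le\min\Big\{\frac{1}{1+\frac8n\big(\frac dk-1\big)},\ \frac p2\Big\},$$ then for all $t\ge0$, $$\mathbb{E}\big[\|\mathbf{w}^{(t+1)}-\mathbf{w}^*\|_2^2\big]\le(1-\eta)^{t+1}\Big[\|\mathbf{w}^{(0)}-\mathbf{w}^*\|_2^2+\frac1n\sum_{i=1}^n\|\nabla F_i(\mathbf{w}^* )\|_2^2\Big],$$ where the expectation is over all the random subsets.
   Context: Gradient descent on a heterogeneous quadratic objective with gradients aggregated by the Rand-$k$-Temporal estimator, where the server's stored vectors $\mathbf{b}_i$ are the most recently received values of each coordinate. *)

(* Defs.v *)
From mathcomp Require Import all_boot all_order all_algebra.
From mathcomp Require Import reals.
Set Implicit Arguments. Unset Strict Implicit. Unset Printing Implicit Defensive.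
Import Order.TTheory GRing.Theory Num.Theory.
Local Open Scope ring_scope.

Definition sqnorm (R : realType) (d : nat) (v : 'I_d -> R) : R :=
  \sum_(j < d) v j ^+ 2.

Definition wstar (R : realType) (n d : nat) (e : 'I_n -> 'I_d -> R) : 'I_d -> R :=
  fun j => n%:R^-1 * \sum_(i < n) e i j.

(* gradient of F_i(w) = 1/2 ||w - e_i||^2 *)
Definition gradF (R : realType) (n d : nat) (e : 'I_n -> 'I_d -> R)
  (i : 'I_n) (w : 'I_d -> R) : 'I_d -> R := fun j => w j - e i j.

(* State of the algorithm: (w, (b_i)_i). *)
Definition rkt_state (R : realType) (n d : nat) : Type :=
  (('I_d -> R) * ('I_n -> 'I_d -> R))%type.

Definition rkt_step (R : realType) (n d k : nat) (eta : R)
  (e : 'I_n -> 'I_d -> R) (S : 'I_n -> {set 'I_d}) (st : rkt_state R n d)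
  : rkt_state R n d :=
  let w := st.1 in let b := st.2 in
  let x := fun i => gradF e i w in
  let h := fun i j => if j \in S i then b i j + (d%:R / k%:R) * (x i j - b i j)
                      else b i j in
  let xhat := fun j => n%:R^-1 * \sum_(i < n) h i j in
  (fun j => w j - eta * xhat j,
   fun i j => if j \in S i then x i j else b i j).

(* The state (w^(t), b^(t)) for the subset schedule sched t i = S_i^(t). *)
Fixpoint rkt_iter (R : realType) (n d k : nat) (eta : R)
  (e : 'I_n -> 'I_d -> R) (w0 : 'I_d -> R)
  (sched : nat -> 'I_n -> {set 'I_d}) (t : nat) : rkt_state R n d :=
  match t with
  | 0 => (w0, fun _ _ => 0)
  | t'.+1 => rkt_step k eta e (sched t') (@rkt_iter R n d k eta e w0 sched t')
  end.

Definition valid_scheds (T n d k : nat) : {set {ffun 'I_T * 'I_n -> {set 'I_d}}} :=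
  [set f : {ffun 'I_T * 'I_n -> {set 'I_d}} | [forall x, #|f x| == k]].

Definition sched_of (T n d : nat) (f : {ffun 'I_T * 'I_n -> {set 'I_d}})
  : nat -> 'I_n -> {set 'I_d} :=
  fun s i => match @insub _ (fun m => m < T)%N 'I_T s with
             | Some s' => f (s', i)
             | None => set0
             end.

(* Expectation over independent uniformly random k-subsets S_i^(t),
   i < n, t < T (uniform average over all such choices). *)
Definition expect_sched (R : realType) (T n d k : nat)
  (Q : (nat -> 'I_n -> {set 'I_d}) -> R) : R :=
  (\sum_(f in valid_scheds T n d k) Q (sched_of f)) / #|valid_scheds T n d k|%:R.

(* Main.v *)
Require Import Defs.
From mathcomp Require Import all_boot all_order all_algebra.
From mathcomp Require Import reals.
From mathcomp Require Import all_fingroup.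
From mathcomp Require Import ring lra.
From Stdlib Require Import FunctionalExtensionality.
Set Implicit Arguments. Unset Strict Implicit. Unset Printing Implicit Defensive.
Import Order.TTheory GRing.Theory Num.Theory.
Definition Ncnt d k (j : 'I_d) : nat := \sum_(S : {set 'I_d} | #|S| == k) (j \in S).

Lemma Ncnt_const d k (j j' : 'I_d) : Ncnt k j = Ncnt k j'.
Proof.
rewrite /Ncnt.
have inj : injective (fun S : {set 'I_d} => tperm j j' @^-1: S).
  move=> S1 S2 /setP E; apply/setP => x; have := E (tperm j j' x).
  by rewrite !inE tpermK.
rewrite (reindex_inj inj) /=; apply: eq_big => S.
  by rewrite card_preimset //; exact: perm_inj.
by rewrite inE tpermL.
Qed.

Lemma Ncnt_sum d k (j : 'I_d) : (Ncnt k j * d = k * #|[set S : {set 'I_d} | #|S| == k]|)%N.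
Proof.
have -> : (Ncnt k j * d = \sum_(j' < d) Ncnt k j')%N.
  by rewrite (eq_bigr (fun _ => Ncnt k j)) ?sum_nat_const ?card_ord 1?mulnC // => i _; apply: Ncnt_const.
rewrite /Ncnt exchange_big /=.
rewrite (eq_bigr (fun _ => k)); last first.
  move=> S /eqP <-; rewrite -sum1_card [RHS]big_mkcond /=.
  by apply: eq_bigr => i _; case: (i \in S).
by rewrite sum_nat_const mulnC cardsE.
Qed.


Local Open Scope ring_scope.
Definition Kset d k : {set {set 'I_d}} := [set S : {set 'I_d} | #|S| == k].
Definition Wset n d k : {set {ffun 'I_n -> {set 'I_d}}} :=
  [set h : {ffun 'I_n -> {set 'I_d}} | [forall i, #|h i| == k]].
Definition EK (R : numFieldType) d k (G : {set 'I_d} -> R) : R :=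
  (\sum_(S in Kset d k) G S) / #|Kset d k|%:R.

Lemma Kset_gt0 d k : (k <= d)%N -> (0 < #|Kset d k|)%N.
Proof. by move=> kd; rewrite /Kset card_draws card_ord bin_gt0. Qed.

Lemma W_prod (R : comRingType) n d k (F : 'I_n -> {set 'I_d} -> R) :
  \sum_(h in Wset n d k) \prod_l F l (h l) = \prod_l \sum_(S in Kset d k) F l S.
Proof.
rewrite (bigA_distr_big (fun S => S \in Kset d k)).
apply: eq_bigl => h; rewrite /Wset inE; apply/forallP/ffun_onP => H i.
  by rewrite inE H.
by have := H i; rewrite inE.
Qed.

Lemma card_W (R : numFieldType) n d k : (k <= d)%N ->
  #|Wset n d k|%:R = (#|Kset d k|%:R : R) ^+ n.
Proof.
move=> kd.
rewrite -sum1_card natr_sum.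
transitivity (\sum_(h in Wset n d k) \prod_(l < n) (1:R)).
  by apply: eq_bigr => h _; rewrite big1.
rewrite (@W_prod R n d k (fun _ _ => 1)).
rewrite prodr_const card_ord; congr (_ ^+ _).
by rewrite -sum1_card natr_sum.
Qed.

Lemma W_E (R : numFieldType) n d k (F : 'I_n -> {set 'I_d} -> R) : (k <= d)%N ->
  \sum_(h in Wset n d k) \prod_l F l (h l) = #|Wset n d k|%:R * \prod_l EK k (F l).
Proof.
move=> kd; rewrite W_prod card_W //.
have -> : (#|Kset d k|%:R : R) ^+ n = \prod_(l < n) (#|Kset d k|%:R : R) by rewrite prodr_const card_ord.
rewrite -big_split /=.
apply: eq_bigr => l _; rewrite /EK mulrC divfK //.
by rewrite pnatr_eq0 -lt0n Kset_gt0.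
Qed.

Lemma EK1 (R : numFieldType) d k : (k <= d)%N -> EK k (fun _ : {set 'I_d} => 1 : R) = 1.
Proof.
move=> kd; rewrite /EK sumr_const divff //.
by rewrite pnatr_eq0 -lt0n Kset_gt0.
Qed.

Lemma prod_pick (R : comRingType) n (i : 'I_n) (a : 'I_n -> R) :
  (forall l, l != i -> a l = 1) -> \prod_l a l = a i.
Proof. by move=> H; rewrite (bigD1 i) //= big1 ?mulr1 // => l /H. Qed.

Lemma prod_pick2 (R : comRingType) n (i i' : 'I_n) (a : 'I_n -> R) : i != i' ->
  (forall l, l != i -> l != i' -> a l = 1) -> \prod_l a l = a i * a i'.
Proof.
move=> ii H; rewrite (bigD1 i) //= (bigD1 i') /=; last by rewrite eq_sym.
by rewrite big1 ?mulr1 // => l /andP [] /H.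
Qed.

Lemma W1 (R : numFieldType) n d k (i : 'I_n) (G : {set 'I_d} -> R) : (k <= d)%N ->
  \sum_(h in Wset n d k) G (h i) = #|Wset n d k|%:R * EK k G.
Proof.
move=> kd.
have := @W_E R n d k (fun l => if l == i then G else fun _ => 1) kd.
rewrite (@prod_pick _ _ i (fun l => EK k _)); last by move=> l /negbTE ->; rewrite EK1.
rewrite eqxx => <-; apply: eq_bigr => h _.
by rewrite (@prod_pick _ _ i) ?eqxx // => l /negbTE ->.
Qed.

Lemma W2 (R : numFieldType) n d k (i i' : 'I_n) (G H : {set 'I_d} -> R) : (k <= d)%N ->
  i != i' ->
  \sum_(h in Wset n d k) G (h i) * H (h i') = #|Wset n d k|%:R * (EK k G * EK k H).
Proof.
move=> kd ii.
have := @W_E R n d k (fun l => if l == i then G else if l == i' then H else fun _ => 1) kd.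
rewrite (@prod_pick2 _ _ i i' (fun l => EK k _)) //; last first.
  by move=> l /negbTE -> /negbTE ->; rewrite EK1.
rewrite eqxx eq_sym (negbTE ii) eqxx => <-; apply: eq_bigr => h _.
rewrite (@prod_pick2 _ _ i i') // ?eqxx ?(eq_sym i' i) ?(negbTE ii) ?eqxx //.
by move=> l /negbTE -> /negbTE ->.
Qed.

Lemma EK_bool (R : numFieldType) d k (j : 'I_d) (phi : bool -> R) : (k <= d)%N ->
  EK k (fun S => phi (j \in S)) =
    k%:R / d%:R * phi true + (1 - k%:R / d%:R) * phi false.
Proof.
move=> kd.
have d0 : (0 < d)%N by case: d j {kd} => [[]|].
have K0 : (#|Kset d k|%:R : R) != 0 by rewrite pnatr_eq0 -lt0n Kset_gt0.
have d0' : (d%:R : R) != 0 by rewrite pnatr_eq0 -lt0n.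
have HN : ((Ncnt k j)%:R : R) = k%:R / d%:R * #|Kset d k|%:R.
  apply: (mulIf d0'); rewrite -natrM Ncnt_sum natrM /Kset.
  by rewrite mulrAC divfK // mulrC.
have Hphi : forall b : bool, phi b = phi false + b%:R * (phi true - phi false).
  by case; rewrite ?mul1r ?mul0r ?addr0 // addrC subrK.
rewrite /EK; under eq_bigr do rewrite Hphi.
rewrite big_split /= sumr_const -mulr_suml.
have -> : \sum_(S in Kset d k) ((j \in S)%:R : R) = (Ncnt k j)%:R.
  rewrite /Ncnt natr_sum; apply: eq_bigl => S; by rewrite inE.
rewrite HN -[phi false *+ _]mulr_natr.
field; apply/andP; split => //.
Qed.
Lemma scalar_ineq (R : realFieldType) (eta p q n r U SD SV : R) :
  0 < eta -> 0 < p -> p * q = 1 -> 0 < n -> r * n = q - 1 -> 0 <= r ->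
  eta <= p / 2 -> eta * (1 + 8 * r) <= 1 -> 0 <= U -> 0 <= SD ->
  SV <= 2 * n * U + 2 * SD ->
  (1 - eta)^+2 * U + eta^+2 * r / n * SV + 4 * eta^+2 * r * q / n * (n * p * U + (1 - p) * SD)
  <= (1 - eta) * (U + 4 * eta^+2 * r * q / n * SD).
Proof.
move=> e0 p0 pq n0 rn r0 ep er U0 SD0 SV0.
have n0' : n != 0 by rewrite gt_eqF.
have A1 : eta^+2 * r / n * SV <= eta^+2 * r / n * (2 * n * U + 2 * SD).
  by rewrite ler_wpM2l // divr_ge0 // ?mulr_ge0 ?sqr_ge0 // ltW.
apply: (le_trans (lerD (lerD (lexx _) A1) (lexx _))).
have -> : (1 - eta)^+2 * U + eta^+2 * r / n * (2 * n * U + 2 * SD) +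
    4 * eta^+2 * r * q / n * (n * p * U + (1 - p) * SD) =
    U * ((1 - eta)^+2 + 2 * eta^+2 * r + 4 * eta^+2 * r * (p * q)) +
    SD / n * (2 * eta^+2 * r + 4 * eta^+2 * r * q * (1 - p)).
  by field.
have -> : (1 - eta) * (U + 4 * eta^+2 * r * q / n * SD) =
    U * (1 - eta) + SD / n * (4 * eta^+2 * r * q * (1 - eta)).
  by field.
rewrite pq.
apply: lerD; apply: ler_wpM2l.
- done.
- have h0 : 0 <= eta * r by apply: mulr_ge0 => //; apply: ltW.
  have h1 : 0 <= 1 - eta - 6 * eta * r.
    move: er; rewrite mulrDr mulr1 => er; lra.
  have h2 : 0 <= eta * (1 - eta - 6 * eta * r) by apply: mulr_ge0 => //; apply: ltW.
  nra.
- by rewrite divr_ge0 // ltW.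
- have qp : q * p = 1 by rewrite mulrC.
  have : 2 * eta <= p by lra.
  move=> H.
  have q0 : 0 <= q by nra.
  have qe : q * eta <= 1 / 2.
    have : 0 <= q * (p - 2 * eta) by apply: mulr_ge0 => //; lra.
    rewrite mulrBr qp; lra.
  have X : 0 <= eta^+2 * r * (1 - 2 * (q * eta)).
    by apply: mulr_ge0; [apply: mulr_ge0 => //; apply: sqr_ge0 | lra].
  rewrite -subr_ge0.
  have -> : 4 * eta ^+ 2 * r * q * (1 - eta) - (2 * eta ^+ 2 * r + 4 * eta ^+ 2 * r * q * (1 - p))
     = 2 * (eta^+2 * r * (1 - 2 * (q * eta))) + 4 * eta^+2 * r * (q * p - 1) by ring.
  rewrite qp subrr mulr0 addr0; lra.
Qed.

Lemma step_fst (R : realType) n d k (eta : R) e (S : 'I_n -> {set 'I_d}) (st : rkt_state R n d) j :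
  (0 < n)%N ->
  (rkt_step k eta e S st).1 j - wstar e j =
  (1 - eta) * (st.1 j - wstar e j) - eta * (n%:R^-1 * \sum_i
     (((j \in S i)%:R * (d%:R / k%:R) - 1) *
      ((st.1 j - wstar e j) - (st.2 i j - gradF e i (wstar e) j)))).
Proof.
move=> n0.
have n0' : (n%:R : R) != 0 by rewrite pnatr_eq0 -lt0n.
case: st => w b /=.
set q := d%:R / k%:R.
have H1 : forall i, (if j \in S i then b i j + q * (gradF e i w j - b i j) else b i j)
    = b i j + (j \in S i)%:R * q * (w j - e i j - b i j).
  by move=> i; rewrite /gradF; case: (j \in S i); rewrite /= ?mul1r ?mul0r ?addr0.
under eq_bigr do rewrite H1.
have H2 : forall i, ((j \in S i)%:R * q - 1) * (w j - wstar e j - (b i j - gradF e i (wstar e) j))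
   = (j \in S i)%:R * q * (w j - e i j - b i j) - w j + e i j + b i j.
  by move=> i; rewrite /gradF; ring.
under [X in _ = _ - eta * (_ * X)]eq_bigr do rewrite H2.
rewrite !big_split /= sumrN sumr_const card_ord.
rewrite /wstar.
set Sa := \sum_(i < n) _.
set Sb := \sum_(i < n) b i j.
set Se := \sum_(i < n) e i j.
rewrite -mulr_natr.
field.
exact: n0'.
Qed.

Lemma step_snd (R : realType) n d k (eta : R) e (S : 'I_n -> {set 'I_d}) (st : rkt_state R n d) i j :
  (rkt_step k eta e S st).2 i j - gradF e i (wstar e) j =
  (st.2 i j - gradF e i (wstar e) j) + (j \in S i)%:R *
      ((st.1 j - wstar e j) - (st.2 i j - gradF e i (wstar e) j)).
Proof.
case: st => w b /=; rewrite /gradF.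
by case: (j \in S i); rewrite /= ?mul1r ?mul0r ?addr0 //; ring.
Qed.

Lemma W_lin (R : realType) n d k (j : 'I_d) (phi : 'I_n -> bool -> R) : (k <= d)%N ->
  \sum_(h in Wset n d k) \sum_i phi i (j \in h i) =
  #|Wset n d k|%:R * \sum_i EK k (fun S => phi i (j \in S)).
Proof.
move=> kd; rewrite exchange_big /= mulr_sumr; apply: eq_bigr => i _.
exact: (@W1 R n d k i (fun S => phi i (j \in S))).
Qed.

Lemma W_sq (R : realType) n d k (j : 'I_d) (phi : 'I_n -> bool -> R) : (k <= d)%N ->
  (forall i, EK k (fun S => phi i (j \in S)) = 0) ->
  \sum_(h in Wset n d k) (\sum_i phi i (j \in h i))^+2 =
  #|Wset n d k|%:R * \sum_i EK k (fun S => (phi i (j \in S))^+2).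
Proof.
move=> kd H0.
under eq_bigr do rewrite expr2 mulr_suml.
under eq_bigr do under eq_bigr do rewrite mulr_sumr.
rewrite exchange_big /= mulr_sumr; apply: eq_bigr => i _.
rewrite exchange_big /= (bigD1 i) //= [X in _ + X]big1 ?addr0.
  rewrite -(@W1 R n d k i (fun S => (phi i (j \in S))^+2)) //.
move=> i' ii'.
rewrite (@W2 R n d k i i' (fun S => phi i (j \in S)) (fun S => phi i' (j \in S))) //.
  by rewrite H0 mul0r mulr0.
by rewrite eq_sym.
Qed.

Definition Psi (R : realType) n d (e : 'I_n -> 'I_d -> R) (A : R) (st : rkt_state R n d) j :=
  (st.1 j - wstar e j)^+2 + A * n%:R^-1 * \sum_i (st.2 i j - gradF e i (wstar e) j)^+2.

Lemma one_step (R : realType) n d k (eta : R) e (st : rkt_state R n d) j :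
  (0 < n)%N -> (0 < k)%N -> (k <= d)%N -> 0 < eta ->
  eta * (1 + 8 * ((d%:R / k%:R - 1) / n%:R)) <= 1 -> eta <= k%:R / d%:R / 2 ->
  \sum_(h in Wset n d k)
     Psi e (4 * eta^+2 * ((d%:R / k%:R - 1) / n%:R) * (d%:R / k%:R))
         (rkt_step k eta e (fun i => h i) st) j
  <= (1 - eta) * (#|Wset n d k|%:R *
     Psi e (4 * eta^+2 * ((d%:R / k%:R - 1) / n%:R) * (d%:R / k%:R)) st j).
Proof.
move=> n0 k0 kd eta0 h8 hp.
set q := d%:R / k%:R.
set r := (q - 1) / n%:R.
set A := 4 * eta^+2 * r * q.
pose p : R := k%:R / d%:R.
set u := st.1 j - wstar e j.
pose D i := st.2 i j - gradF e i (wstar e) j.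
pose phiZ i (b : bool) := (b%:R * q - 1) * (u - D i).
pose phiD i (b : bool) := (D i + b%:R * (u - D i))^+2.
have E1 : forall h : {ffun 'I_n -> {set 'I_d}},
   Psi e A (rkt_step k eta e (fun i => h i) st) j =
   ((1 - eta) * u)^+2 - 2 * ((1 - eta) * u) * (eta * n%:R^-1) * (\sum_i phiZ i (j \in h i))
   + (eta * n%:R^-1)^+2 * (\sum_i phiZ i (j \in h i))^+2
   + A * n%:R^-1 * \sum_i phiD i (j \in h i).
  move=> h; rewrite /Psi step_fst //.
  rewrite [X in A / _ * X](eq_bigr (fun i => phiD i (j \in h i))); last first.
    by move=> i _; rewrite step_snd.
  rewrite -/u.
  have -> : \sum_i ((j \in h i)%:R * (d%:R / k%:R) - 1) *
      (u - (st.2 i j - gradF e i (wstar e) j)) = \sum_i phiZ i (j \in h i) by [].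
  move: (\sum_i phiZ i _) => X; move: (\sum_i phiD i _) => Y.
  ring.
under eq_bigr do rewrite E1.
have k0' : (k%:R : R) != 0 by rewrite pnatr_eq0 -lt0n.
have d0' : (d%:R : R) != 0 by rewrite pnatr_eq0 -lt0n (leq_trans k0 kd).
have n0' : (n%:R : R) != 0 by rewrite pnatr_eq0 -lt0n.
have pq : p * q = 1 by rewrite /p /q; field; apply/andP.
have EZ : forall i, EK k (fun S => phiZ i (j \in S)) = 0.
  move=> i; rewrite (@EK_bool R d k j (phiZ i) kd) -/p /phiZ /=.
  rewrite mul1r mul0r.
  have -> : p * ((q - 1) * (u - D i)) + (1 - p) * ((0 - 1) * (u - D i)) = (p * q - 1) * (u - D i) by ring.
  by rewrite pq subrr mul0r.
have EZ2 : forall i, EK k (fun S => (phiZ i (j \in S))^+2) = (q - 1) * (u - D i)^+2.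
  move=> i; rewrite (@EK_bool R d k j (fun b => (phiZ i b)^+2) kd) -/p /phiZ /=.
  rewrite mul1r mul0r.
  have -> : p * ((q - 1) * (u - D i))^+2 + (1 - p) * ((0 - 1) * (u - D i))^+2 =
     ((p * q) * q - 2 * (p * q) + 1) * (u - D i)^+2 by ring.
  by rewrite pq; congr (_ * _); ring.
have ED : forall i, EK k (fun S => phiD i (j \in S)) = p * u^+2 + (1 - p) * (D i)^+2.
  move=> i; rewrite (@EK_bool R d k j (phiD i) kd) -/p /phiD /=.
  by rewrite mul1r mul0r addr0; congr (_ * _ + _); congr (_ ^+ 2); ring.
rewrite !big_split /= sumrN -!mulr_sumr.
rewrite (W_lin j phiZ) // (@W_sq _ _ _ _ j phiZ) // (W_lin j phiD) //.
have S0 : \sum_i EK k (fun S => phiZ i (j \in S)) = 0 by rewrite big1 // => i _; exact: EZ.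
rewrite S0 mulr0 mulr0 subr0.
have S2 : \sum_i EK k (fun S => (phiZ i (j \in S))^+2) = \sum_i (q - 1) * (u - D i)^+2.
  by apply: eq_bigr => i _; exact: EZ2.
have S3 : \sum_i EK k (fun S => phiD i (j \in S)) = \sum_i (p * u^+2 + (1 - p) * (D i)^+2).
  by apply: eq_bigr => i _; exact: ED.
rewrite S2 S3 sumr_const.
set W := #|Wset n d k|%:R.
set U := u ^+ 2.
set SD := \sum_i (D i)^+2.
set SV := \sum_i (u - D i)^+2.
have -> : Psi e A st j = U + A / n%:R * SD by [].
have -> : \sum_i (q - 1) * (u - D i) ^+ 2 = (q - 1) * SV by rewrite mulr_sumr.
have -> : \sum_i (p * u ^+ 2 + (1 - p) * D i ^+ 2) = n%:R * p * U + (1 - p) * SD.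
  by rewrite big_split /= -[\sum_(i < n) (1 - p) * _]mulr_sumr sumr_const card_ord -mulrA mulr_natl.
have -> : (1 - eta) * u * ((1 - eta) * (u *+ #|Wset n d k|)) +
    (eta / n%:R) ^+ 2 * (W * ((q - 1) * SV)) +
    A / n%:R * (W * (n%:R * p * U + (1 - p) * SD)) =
    W * ((1 - eta)^+2 * U + eta^+2 * r / n%:R * SV + 4 * eta^+2 * r * q / n%:R * (n%:R * p * U + (1 - p) * SD)).
  rewrite -[u *+ _]mulr_natr -/W /U /A /r; field; exact: n0'.
rewrite [X in _ <= X]mulrCA; apply: ler_wpM2l; first exact: ler0n.
have p0 : 0 < p by rewrite /p divr_gt0 // ltr0n // (leq_trans k0 kd).
have q1 : 1 <= q.
  by rewrite /q ler_pdivlMr ?mul1r ?ler_nat // ltr0n.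
have r0 : 0 <= r by rewrite /r divr_ge0 // subr_ge0.
rewrite /A.
apply: (@scalar_ineq R eta p q n%:R r U SD SV) => //.
- by rewrite ltr0n.
- by rewrite /r divfK.
- by rewrite /U sqr_ge0.
- by rewrite /SD sumr_ge0 // => i _; rewrite sqr_ge0.
- rewrite /SV /SD /U.
  apply: le_trans (_ : \sum_i (2 * u^+2 + 2 * (D i)^+2) <= _).
    apply: ler_sum => i _.
    rewrite -subr_ge0 (_ : _ - _ = (u + D i)^+2); first exact: sqr_ge0.
    ring.
  by rewrite big_split /= -mulr_sumr sumr_const card_ord -[\sum_(i < n) 2 * _]mulr_sumr -[u ^+ 2 *+ n]mulr_natl mulrA.
Qed.

Definition joinf T n d (g : {ffun 'I_T * 'I_n -> {set 'I_d}}) (h : {ffun 'I_n -> {set 'I_d}})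
  : {ffun 'I_T.+1 * 'I_n -> {set 'I_d}} :=
  [ffun p => if unlift ord_max p.1 is Some s then g (s, p.2) else h p.2].

Definition splitf T n d (f : {ffun 'I_T.+1 * 'I_n -> {set 'I_d}}) :
  {ffun 'I_T * 'I_n -> {set 'I_d}} * {ffun 'I_n -> {set 'I_d}} :=
  ([ffun p => f (lift ord_max p.1, p.2)], [ffun i => f (ord_max, i)]).

Lemma joinfK T n d : cancel (fun p => @joinf T n d p.1 p.2) (@splitf T n d).
Proof.
move=> [g h]; rewrite /splitf /joinf; congr (_, _); apply/ffunP => x; rewrite !ffunE.
  by rewrite liftK; case: x.
by rewrite unlift_none.
Qed.

Lemma splitfK T n d : cancel (@splitf T n d) (fun p => @joinf T n d p.1 p.2).
Proof.
move=> f; apply/ffunP => [[s i]]; rewrite /splitf /joinf !ffunE /=.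
by case: unliftP => [s'|] -> //=; rewrite ffunE.
Qed.

Lemma joinf_valid T n d k g h :
  (@joinf T n d g h \in valid_scheds T.+1 n d k) = (g \in valid_scheds T n d k) && (h \in Wset n d k).
Proof.
rewrite /valid_scheds /Wset !inE.
apply/forallP/andP => [H|[/forallP Hg /forallP Hh] [s i]].
  split; apply/forallP.
    move=> [s i]; have := H (lift ord_max s, i); by rewrite /joinf ffunE /= liftK.
  move=> i; have := H (ord_max, i); by rewrite /joinf ffunE /= unlift_none.
rewrite /joinf ffunE /=.
case: unliftP => [s'|] _ /=; [exact: (Hg (s', i)) | exact: Hh].
Qed.

Lemma sum_split (R : realType) T n d k (Q : {ffun 'I_T.+1 * 'I_n -> {set 'I_d}} -> R) :
  \sum_(f in valid_scheds T.+1 n d k) Q f =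
  \sum_(g in valid_scheds T n d k) \sum_(h in Wset n d k) Q (joinf g h).
Proof.
rewrite pair_big /=.
rewrite (reindex (fun p => @joinf T n d p.1 p.2)) /=.
  by apply: eq_bigl => -[g h] /=; rewrite joinf_valid.
exists (@splitf T n d) => x _; [exact: joinfK | exact: splitfK].
Qed.

Lemma sched_join_lt T n d g h s i : (s < T)%N ->
  sched_of (@joinf T n d g h) s i = sched_of g s i.
Proof.
move=> sT; rewrite /sched_of.
case: insubP => [s1 _ Es1|]; last by rewrite ltnS ltnW.
case: insubP => [s2 _ Es2|]; last by rewrite sT.
rewrite /joinf ffunE /=.
case: unliftP => [s3 E3|E3].
  congr (g (_, i)); apply: val_inj; rewrite Es2.
  by move: E3 => /(congr1 val); rewrite /= /bump leqNgt ltn_ord add0n Es1.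
by move: E3 => /(congr1 val) /=; rewrite Es1 => E; rewrite E ltnn in sT.
Qed.

Lemma sched_join_T T n d g h i :
  sched_of (@joinf T n d g h) T i = h i.
Proof.
rewrite /sched_of.
case: insubP => [s1 _ Es1|]; last by rewrite ltnS leqnn.
rewrite /joinf ffunE /=.
have -> : s1 = ord_max by apply: val_inj; rewrite Es1.
by rewrite unlift_none.
Qed.

Lemma iter_ext (R : realType) n d k (eta : R) e w0 (s1 s2 : nat -> 'I_n -> {set 'I_d}) t :
  (forall s i, (s < t)%N -> s1 s i = s2 s i) ->
  rkt_iter k eta e w0 s1 t = rkt_iter k eta e w0 s2 t.
Proof.
elim: t => [//|t IH] H /=.
rewrite IH; last by move=> s i st; apply: H; rewrite ltnS ltnW.
have -> : s1 t = s2 t by apply: functional_extensionality => i; apply: H.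
by [].
Qed.

Definition Phi (R : realType) n d (e : 'I_n -> 'I_d -> R) (A : R) (st : rkt_state R n d) :=
  \sum_j Psi e A st j.

Lemma main_ind (R : realType) n d k (eta : R) e w0 T :
  (0 < n)%N -> (0 < k)%N -> (k <= d)%N -> 0 < eta ->
  eta * (1 + 8 * ((d%:R / k%:R - 1) / n%:R)) <= 1 -> eta <= k%:R / d%:R / 2 ->
  \sum_(f in valid_scheds T n d k)
     Phi e (4 * eta^+2 * ((d%:R / k%:R - 1) / n%:R) * (d%:R / k%:R))
         (rkt_iter k eta e w0 (sched_of f) T)
  <= (1 - eta) ^+ T * Phi e (4 * eta^+2 * ((d%:R / k%:R - 1) / n%:R) * (d%:R / k%:R))
         (w0, fun _ _ => 0) * #|valid_scheds T n d k|%:R.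
Proof.
move=> n0 k0 kd eta0 h8 hp.
set A := 4 * eta^+2 * _ * _.
have e1 : 0 <= 1 - eta.
  have : k%:R / d%:R <= (1 : R).
    rewrite ler_pdivrMr ?mul1r ?ler_nat // ltr0n; exact: (leq_trans k0 kd).
  lra.
elim: T => [|T IH].
  by rewrite (eq_bigr (fun _ => Phi e A (w0, fun _ _ => 0))) // sumr_const expr0 mul1r mulr_natr.
rewrite sum_split.
have Hc : #|valid_scheds T.+1 n d k|%:R = #|valid_scheds T n d k|%:R * (#|Wset n d k|%:R : R).
  rewrite -!sum1_card !natr_sum sum_split mulr_suml; apply: eq_bigr => g _.
  by rewrite mul1r.
rewrite Hc.
apply: le_trans (_ : \sum_(g in valid_scheds T n d k)
   (1 - eta) * (#|Wset n d k|%:R * Phi e A (rkt_iter k eta e w0 (sched_of g) T)) <= _).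
  apply: ler_sum => g _.
  have Eh : forall h, rkt_iter k eta e w0 (sched_of (joinf g h)) T.+1 =
      rkt_step k eta e (fun i => h i) (rkt_iter k eta e w0 (sched_of g) T).
    move=> h /=.
    rewrite (@iter_ext R n d k eta e w0 (sched_of (joinf g h)) (sched_of g) T); last first.
      by move=> s i sT; apply: sched_join_lt.
    have -> : sched_of (joinf g h) T = (fun i => h i).
      by apply: functional_extensionality => i; apply: sched_join_T.
    by [].
  under eq_bigr do rewrite Eh.
  rewrite /Phi exchange_big /= mulr_sumr mulr_sumr.
  apply: ler_sum => j _.
  exact: one_step.
rewrite -!mulr_sumr.
rewrite exprS -!mulrA; apply: ler_wpM2l => //.
rewrite (mulrC #|valid_scheds T n d k|%:R) !mulrA [X in X <= _]mulrC.
rewrite [X in _ <= X]mulrAC; apply: ler_wpM2r; first exact: ler0n.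
exact: IH.
Qed.

Unset Implicit Arguments.
Theorem theorem4 (R : realType) (n d k : nat) (eta : R)
  (e : 'I_n -> 'I_d -> R) (w0 : 'I_d -> R) :
  (1 <= n)%N -> (1 <= k)%N -> (k <= d)%N -> 0 < eta ->
  eta <= (1 + 8 / n%:R * (d%:R / k%:R - 1))^-1 ->
  eta <= (k%:R / d%:R) / 2 ->
  forall t : nat,
    expect_sched t.+1 k
      (fun sched => sqnorm (fun j => (rkt_iter k eta e w0 sched t.+1).1 j - wstar e j))
    <= (1 - eta) ^+ t.+1 *
       (sqnorm (fun j => w0 j - wstar e j)
        + n%:R^-1 * \sum_(i < n) sqnorm (gradF e i (wstar e))).
Proof.
move=> n0 k0 kd eta0 hinv hp t.
have k0' : (k%:R : R) != 0 by rewrite pnatr_eq0 -lt0n.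
have kR : (0 : R) < k%:R by rewrite ltr0n.
have dR : (0 : R) < d%:R by rewrite ltr0n (leq_trans k0 kd).
have nR : (0 : R) < n%:R by rewrite ltr0n.
have q1 : 1 <= d%:R / k%:R :> R by rewrite ler_pdivlMr ?mul1r ?ler_nat.
have r0 : 0 <= (d%:R / k%:R - 1) / n%:R :> R by rewrite divr_ge0 ?subr_ge0 // ltW.
have h8 : eta * (1 + 8 * ((d%:R / k%:R - 1) / n%:R)) <= 1.
  have X0 : 0 < 1 + 8 / n%:R * (d%:R / k%:R - 1) :> R.
    by rewrite ltr_wpDr // mulr_ge0 ?subr_ge0 // divr_ge0 // ltW.
  have -> : 1 + 8 * ((d%:R / k%:R - 1) / n%:R) = 1 + 8 / n%:R * (d%:R / k%:R - 1) :> R.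
    by ring.
  by move: hinv; rewrite -div1r ler_pdivlMr.
set q := d%:R / k%:R in q1 r0 h8 *.
set r := (q - 1) / n%:R in r0 h8 *.
have Hm := @main_ind R n d k eta e w0 t.+1 n0 k0 kd eta0 h8 hp.
set A := 4 * eta ^+ 2 * r * q in Hm.
have q0 : 0 <= q by exact: (le_trans ler01 q1).
have A0 : 0 <= A by rewrite /A; apply: mulr_ge0 => //; apply: mulr_ge0 => //; apply: mulr_ge0 => //; exact: sqr_ge0.
have A1 : A <= 1.
  have pq : k%:R / d%:R * q = 1 by rewrite /q; field; apply/andP; split => //; rewrite gt_eqF.
  have eq : eta * q <= 1 / 2.
    have : 0 <= q * (k%:R / d%:R - 2 * eta) by apply: mulr_ge0; [exact: (le_trans ler01 q1)| lra].
    rewrite mulrBr mulrC pq; lra.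
  have er : eta * r <= 1 / 8.
    have : 0 <= eta * r by rewrite mulr_ge0 // ltW.
    move: h8; rewrite mulrDr mulr1; lra.
  have -> : A = 4 * ((eta * q) * (eta * r)) by rewrite /A; ring.
  have : (eta * q) * (eta * r) <= 1 / 2 * (1 / 8).
    apply: ler_pM => //; apply: mulr_ge0 => //; exact: ltW.
  lra.
have V0 : (0 < #|valid_scheds t.+1 n d k|)%N.
  have /card_gt0P [S0 HS0] := Kset_gt0 kd.
  apply/card_gt0P; exists [ffun _ => S0]; rewrite inE; apply/forallP => x.
  by rewrite ffunE; move: HS0; rewrite inE.
rewrite /expect_sched ler_pdivrMr ?ltr0n //.
apply: le_trans (le_trans _ Hm) _.
  apply: ler_sum => f _.
  rewrite /Phi /sqnorm; apply: ler_sum => j _.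
  rewrite /Psi lerDl; apply: mulr_ge0; first by apply: mulr_ge0 => //; rewrite invr_ge0 ltW.
  by apply: sumr_ge0 => i _; rewrite sqr_ge0.
apply: ler_wpM2r; first exact: ler0n.
have e1 : 0 <= 1 - eta.
  have : k%:R / d%:R <= (1 : R) by rewrite ler_pdivrMr ?mul1r ?ler_nat.
  lra.
apply: ler_wpM2l; first exact: exprn_ge0.
rewrite /Phi /Psi big_split /=.
apply: lerD; first by [].
rewrite -mulr_sumr /sqnorm exchange_big /= -mulrA.
under eq_bigr do under eq_bigr do rewrite sub0r sqrrN.
apply: ler_piMl => //.
apply: mulr_ge0; first by rewrite invr_ge0 ltW.
by apply: sumr_ge0 => i _; apply: sumr_ge0 => j _; rewrite sqr_ge0.
Qed.
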